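(* Let $\lambda>0$ and let $H_3=\mathbb{R}^3$ with coordinates $(x,y,z)$ carry the Lorentzian metric $g_1=-\frac{1}{\lambda^2}dx^2+dy^2+(x\,dy+dz)^2$, with Levi-Civita connection $\nabla$. Let $e_1=\partial_z$, $e_2=\partial_y-x\partial_z$, $e_3=\lambda\partial_x$, and let $V_3=\lambda\partial_x-\lambda y\partial_z\,(=-\lambda ye_1+e_3)$. Then every $V_3$-magnetic curve $\gamma(t)=(x(t),y(t),z(t))$, i.e. every smooth curve with $\nabla_{\gamma'}\gamma'=V_3\wedge\gamma'$, satisfies the system $y''+x'(z'+xy')=yx'+(z'+xy')$, $\frac{x''}{\lambda}+\lambda y'(z'+xy')=\lambda yy'$, $(z'+xy')'=-y'$.
   Context: $(e_1,e_2,e_3)$ is a $g_1$-orthonormal frame with $e_3$ timelike. For $X=\sum X^ie_i$, $Y=\sum Y^ie_i$ the vector product is defined in this frame by $X\wedge Y=(X^2Y^3-X^3Y^2)e_1+(X^3Y^1-X^1Y^3)e_2+(X^2Y^1-X^1Y^2)e_3$. Primes denote derivatives in $t$. *)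

(* Defs.v *)
From Stdlib Require Import Reals Lra.
From Coquelicot Require Import Coquelicot.
Open Scope R_scope.

(* Points and (coordinate) vectors of R^3 are functions nat -> R, using the
   indices 0,1,2 for the coordinates x,y,z. *)
Definition pt3 (x y z : R) : nat -> R :=
  fun i => match i with 0%nat => x | 1%nat => y | _ => z end.

Definition sum3 (f : nat -> R) : R := f 0%nat + f 1%nat + f 2%nat.

Definition upd (p : nat -> R) (i : nat) (s : R) : nat -> R :=
  fun j => if Nat.eqb j i then s else p j.

Definition pd (f : (nat -> R) -> R) (i : nat) (p : nat -> R) : R :=
  Derive (fun s => f (upd p i s)) (p i).

(* The Lorentzian metric g1 = -(1/lam^2) dx^2 + dy^2 + (x dy + dz)^2,
   as its matrix of components in the coordinates (x,y,z). *)
Definition g1 (lam : R) (p : nat -> R) (i j : nat) : R :=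
  match i, j with
  | 0%nat, 0%nat => - / (lam ^ 2)
  | 1%nat, 1%nat => 1 + (p 0%nat) ^ 2
  | 1%nat, 2%nat => p 0%nat
  | 2%nat, 1%nat => p 0%nat
  | 2%nat, 2%nat => 1
  | _, _ => 0
  end.

Definition det3 (m : nat -> nat -> R) : R :=
  m 0%nat 0%nat * (m 1%nat 1%nat * m 2%nat 2%nat - m 1%nat 2%nat * m 2%nat 1%nat)
  - m 0%nat 1%nat * (m 1%nat 0%nat * m 2%nat 2%nat - m 1%nat 2%nat * m 2%nat 0%nat)
  + m 0%nat 2%nat * (m 1%nat 0%nat * m 2%nat 1%nat - m 1%nat 1%nat * m 2%nat 0%nat).

Definition nx (i : nat) : nat := match i with 0%nat => 1%nat | 1%nat => 2%nat | _ => 0%nat end.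
Definition nnx (i : nat) : nat := nx (nx i).

(* (i,j) entry of the inverse: cofactor C_{ji} / det *)
Definition inv3 (m : nat -> nat -> R) (i j : nat) : R :=
  (m (nx j) (nx i) * m (nnx j) (nnx i) - m (nx j) (nnx i) * m (nnx j) (nx i))
  / det3 m.

Definition christoffel (g : (nat -> R) -> nat -> nat -> R)
  (k i j : nat) (p : nat -> R) : R :=
  / 2 * sum3 (fun l => inv3 (g p) k l *
     (pd (fun q => g q j l) i p + pd (fun q => g q i l) j p
      - pd (fun q => g q i j) l p)).

Definition curve (x y z : R -> R) (t : R) : nat -> R := pt3 (x t) (y t) (z t).
Definition vel (x y z : R -> R) (t : R) : nat -> R :=
  pt3 (Derive x t) (Derive y t) (Derive z t).
Definition cov_acc (g : (nat -> R) -> nat -> nat -> R) (x y z : R -> R)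
  (t : R) (k : nat) : R :=
  pt3 (Derive (Derive x) t) (Derive (Derive y) t) (Derive (Derive z) t) k
  + sum3 (fun i => sum3 (fun j =>
      christoffel g k i j (curve x y z t) * vel x y z t i * vel x y z t j)).

(* The frame e_1 = d_z, e_2 = d_y - x d_z, e_3 = lam d_x (frame index 0,1,2
   stands for e_1,e_2,e_3), as coordinate vectors at p. *)
Definition frame (lam : R) (p : nat -> R) (a : nat) : nat -> R :=
  match a with
  | 0%nat => pt3 0 0 1
  | 1%nat => pt3 0 1 (- p 0%nat)
  | _ => pt3 lam 0 0
  end.

Definition frame_comb (lam : R) (p : nat -> R) (c : nat -> R) : nat -> R :=
  fun k => sum3 (fun a => c a * frame lam p a k).

(* Vector product in frame components, exactly as defined in the paper:
   X^Y = (X2Y3-X3Y2) e1 + (X3Y1-X1Y3) e2 + (X2Y1-X1Y2) e3 *)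
Definition wedge (X Y : nat -> R) : nat -> R :=
  pt3 (X 1%nat * Y 2%nat - X 2%nat * Y 1%nat)
      (X 2%nat * Y 0%nat - X 0%nat * Y 2%nat)
      (X 1%nat * Y 0%nat - X 0%nat * Y 1%nat).

Definition V3 (lam : R) (p : nat -> R) : nat -> R :=
  pt3 lam 0 (- lam * p 1%nat).

(* gamma is a V_3-magnetic curve: nabla_{gamma'} gamma' = V_3 ^ gamma',
   where the wedge is computed from the frame components of V_3 and gamma'. *)
Definition magnetic_V3 (lam : R) (x y z : R -> R) : Prop :=
  forall t (a b : nat -> R),
    (forall k, (k < 3)%nat -> V3 lam (curve x y z t) k = frame_comb lam (curve x y z t) a k) ->
    (forall k, (k < 3)%nat -> vel x y z t k = frame_comb lam (curve x y z t) b k) ->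
    forall k, (k < 3)%nat ->
      cov_acc (g1 lam) x y z t k = frame_comb lam (curve x y z t) (wedge a b) k.

Definition smooth (f : R -> R) : Prop := forall n t, ex_derive_n f n t.

(* Main.v *)
Require Import Defs.
From Stdlib Require Import Reals Lra Lia.
From Coquelicot Require Import Coquelicot.
Open Scope R_scope.

Definition G (lam : R) (j l : nat) (u : R) : R :=
  match j, l with
  | 0%nat, 0%nat => - / (lam ^ 2)
  | 1%nat, 1%nat => 1 + u ^ 2
  | 1%nat, 2%nat => u
  | 2%nat, 1%nat => u
  | 2%nat, 2%nat => 1
  | _, _ => 0
  end.
Definition dG (j l : nat) (u : R) : R :=
  match j, l with
  | 1%nat, 1%nat => 2 * u
  | 1%nat, 2%nat => 1
  | 2%nat, 1%nat => 1
  | _, _ => 0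
  end.

Lemma g1G lam q j l : g1 lam q j l = G lam j l (q 0%nat).
Proof. destruct j as [|[|[|j]]]; destruct l as [|[|[|l]]]; reflexivity. Qed.

Lemma DG lam j l u : Derive (G lam j l) u = dG j l u.
Proof.
  apply is_derive_unique.
  unfold G, dG; destruct j as [|[|[|j]]]; destruct l as [|[|[|l]]]; simpl;
  first [apply is_derive_const | auto_derive; [auto| ring]].
Qed.

Lemma pd_g1 lam i j l p :
  pd (fun q => g1 lam q j l) i p = match i with 0%nat => dG j l (p 0%nat) | _ => 0 end.
Proof.
  unfold pd. destruct i as [|i].
  - rewrite <- (DG lam). apply Derive_ext. intro s. rewrite g1G. reflexivity.
  - rewrite <- (Derive_const (G lam j l (p 0%nat)) (p (S i))). apply Derive_ext.
    intro s. rewrite g1G. reflexivity.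
Qed.


Lemma cov_closed lam x y z t k : lam <> 0 -> (k < 3)%nat ->
  cov_acc (g1 lam) x y z t k =
  let X1 := Derive x t in let Y1 := Derive y t in let Z1 := Derive z t in
  let X2 := Derive (Derive x) t in let Y2 := Derive (Derive y) t in
  let Z2 := Derive (Derive z) t in let w := Z1 + x t * Y1 in
  match k with
  | 0%nat => X2 + lam^2 * Y1 * w
  | 1%nat => Y2 + X1 * w
  | _ => Z2 + X1 * Y1 - x t * X1 * w
  end.
Proof.
  intros Hl Hk.
  unfold cov_acc, christoffel, sum3. cbv beta. rewrite !pd_g1.
  unfold inv3, det3, g1, dG, nnx, nx, vel, curve, pt3.
  destruct k as [|[|[|k]]]; simpl; try lia; field; auto.
  all: split; [auto | replace (1 + x t * x t - x t * x t) with 1 by ring; lra].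
Qed.

Lemma dsum f g h t : ex_derive f t -> ex_derive g t -> ex_derive h t ->
  Derive (fun s => f s + g s * h s) t = Derive f t + (Derive g t * h t + g t * Derive h t).
Proof.
  intros. rewrite Derive_plus; auto. rewrite Derive_mult; auto.
  apply ex_derive_mult; auto.
Qed.

Theorem mainTheorem3 (lam : R) (x y z : R -> R) :
  0 < lam -> smooth x -> smooth y -> smooth z ->
  magnetic_V3 lam x y z ->
  forall t : R,
    Derive (Derive y) t + Derive x t * (Derive z t + x t * Derive y t)
      = y t * Derive x t + (Derive z t + x t * Derive y t)
    /\ Derive (Derive x) t / lam + lam * Derive y t * (Derive z t + x t * Derive y t)
      = lam * y t * Derive y t
    /\ Derive (fun s => Derive z s + x s * Derive y s) t = - Derive y t.
Proof.
  intros Hl Sx Sy Sz HM t.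
  assert (Hl0 : lam <> 0) by lra.
  set (w := Derive z t + x t * Derive y t).
  specialize (HM t (pt3 (- lam * y t) 0 1) (pt3 w (Derive y t) (Derive x t / lam))).
  assert (H : forall k, (k < 3)%nat ->
      cov_acc (g1 lam) x y z t k = frame_comb lam (curve x y z t)
        (wedge (pt3 (- lam * y t) 0 1) (pt3 w (Derive y t) (Derive x t / lam))) k).
  { apply HM.
    - intros k Hk; destruct k as [|[|[|k]]]; unfold V3, frame_comb, sum3, frame, curve, pt3;
      simpl; try lia; ring.
    - intros k Hk; destruct k as [|[|[|k]]]; unfold vel, frame_comb, sum3, frame, curve, pt3, w;
      simpl; try lia; field; auto. }
  pose proof (H 0%nat ltac:(lia)) as H0.
  pose proof (H 1%nat ltac:(lia)) as H1.
  pose proof (H 2%nat ltac:(lia)) as H2.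
  rewrite cov_closed in H0, H1, H2; auto.
  unfold frame_comb, sum3, frame, wedge, curve, pt3 in H0, H1, H2; simpl in H0, H1, H2.
  fold w in H0, H1, H2.
  assert (E0 : Derive (Derive x) t + lam^2 * Derive y t * w = lam^2 * y t * Derive y t).
  { simpl; rewrite H0. field. auto. }
  assert (E1 : Derive (Derive y) t + Derive x t * w = w + y t * Derive x t).
  { simpl; rewrite H1. field. auto. }
  assert (E2 : Derive (Derive z) t + Derive x t * Derive y t - x t * Derive x t * w
               = - Derive y t - x t * (w + y t * Derive x t)).
  { simpl; rewrite H2. field. auto. }
  split; [|split].
  - lra.
  - apply (Rmult_eq_reg_l lam); auto.
    replace (lam * (Derive (Derive x) t / lam + lam * Derive y t * w))
      with (Derive (Derive x) t + lam^2 * Derive y t * w) by (field; auto).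
    rewrite E0. ring.
  - rewrite dsum.
    + replace (Derive (Derive z) t) with
        (- Derive y t - x t * (w + y t * Derive x t) - Derive x t * Derive y t + x t * Derive x t * w) by lra.
      replace (Derive (Derive y) t) with (w + y t * Derive x t - Derive x t * w) by lra.
      unfold w; ring.
    + exact (Sz 2%nat t).
    + apply (Sx 1%nat t).
    + exact (Sy 2%nat t).
Qed.
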